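(* Let $\Gamma\subseteq G_1$ be a subgroup acting freely on $\mathbb{H}^2$. Then $h(\Gamma)$ is abelian, and there exists a complex plane $\mathbb{C}_I=\mathbb{R}+\mathbb{R}I$ (for some imaginary unit $I\in\mathbb{H}$, $I^2=-1$) containing every $a\in\mathbb{H}$ such that $\begin{pmatrix}a&b\\0&1\end{pmatrix}\in h(\Gamma)$ for some $b\in\mathbb{H}$.
   Context: $G_1=\left\{\begin{pmatrix} a&b&r\\ 0&1&s\\ 0&0&1\end{pmatrix}: a,b,r,s\in\mathbb{H}, a\neq0\right\}$, acting on $(x,y)\in\mathbb{H}^2$ by $(x,y)\mapsto(ax+by+r,y+s)$. For such a matrix $A$, $h(A)=\begin{pmatrix}a&b\\0&1\end{pmatrix}$ is its holonomy part, and $h(\Gamma)=\{h(A):A\in\Gamma\}$. *)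

(* Defs.v *)
From Stdlib Require Import Reals.
Open Scope R_scope.

Record quat := Quat { q0 : R; q1 : R; q2 : R; q3 : R }.

Definition qzero : quat := Quat 0 0 0 0.
Definition qone : quat := Quat 1 0 0 0.
Definition qreal (x : R) : quat := Quat x 0 0 0.
Definition qadd (p q : quat) : quat :=
  Quat (q0 p + q0 q) (q1 p + q1 q) (q2 p + q2 q) (q3 p + q3 q).
Definition qopp (p : quat) : quat := Quat (- q0 p) (- q1 p) (- q2 p) (- q3 p).
(* Hamilton product: p = a + b i + c j + d k *)
Definition qmul (p q : quat) : quat :=
  Quat (q0 p * q0 q - q1 p * q1 q - q2 p * q2 q - q3 p * q3 q)
       (q0 p * q1 q + q1 p * q0 q + q2 p * q3 q - q3 p * q2 q)
       (q0 p * q2 q - q1 p * q3 q + q2 p * q0 q + q3 p * q1 q)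
       (q0 p * q3 q + q1 p * q2 q - q2 p * q1 q + q3 p * q0 q).
Definition qconj (p : quat) : quat := Quat (q0 p) (- q1 p) (- q2 p) (- q3 p).
Definition qnorm2 (p : quat) : R := q0 p ^ 2 + q1 p ^ 2 + q2 p ^ 2 + q3 p ^ 2.
Definition qinv (p : quat) : quat :=
  qmul (qreal (/ qnorm2 p)) (qconj p).

(* A matrix [[a,b,r],[0,1,s],[0,0,1]] with a,b,r,s in H. *)
Record G1mat := G1M { ga : quat; gb : quat; gr : quat; gs : quat }.

Definition inG1 (A : G1mat) : Prop := ga A <> qzero.

Definition g1id : G1mat := G1M qone qzero qzero qzero.

Definition g1mul (A B : G1mat) : G1mat :=
  G1M (qmul (ga A) (ga B))
      (qadd (qmul (ga A) (gb B)) (gb A))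
      (qadd (qadd (qmul (ga A) (gr B)) (qmul (gb A) (gs B))) (gr A))
      (qadd (gs B) (gs A)).

Definition g1inv (A : G1mat) : G1mat :=
  let ai := qinv (ga A) in
  G1M ai (qopp (qmul ai (gb A)))
      (qopp (qmul ai (qadd (gr A) (qopp (qmul (gb A) (gs A))))))
      (qopp (gs A)).

Definition g1act (A : G1mat) (xy : quat * quat) : quat * quat :=
  (qadd (qadd (qmul (ga A) (fst xy)) (qmul (gb A) (snd xy))) (gr A),
   qadd (snd xy) (gs A)).

Definition is_subgroup_G1 (Gamma : G1mat -> Prop) : Prop :=
  (forall A, Gamma A -> inG1 A) /\
  Gamma g1id /\
  (forall A B, Gamma A -> Gamma B -> Gamma (g1mul A B)) /\
  (forall A, Gamma A -> Gamma (g1inv A)).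

Definition acts_freely (Gamma : G1mat -> Prop) : Prop :=
  forall A, Gamma A -> forall xy : quat * quat, g1act A xy = xy -> A = g1id.

(* holonomy part h(A) = [[a,b],[0,1]], represented by the pair (a,b) *)
Definition hol (A : G1mat) : quat * quat := (ga A, gb A).

Definition holmul (P Q : quat * quat) : quat * quat :=
  (qmul (fst P) (fst Q), qadd (qmul (fst P) (snd Q)) (snd P)).

Definition hol_abelian (Gamma : G1mat -> Prop) : Prop :=
  forall A B, Gamma A -> Gamma B -> holmul (hol A) (hol B) = holmul (hol B) (hol A).

(* Main.v *)
Require Import Defs.
From Stdlib Require Import Reals Lra Psatz Classical.
Open Scope R_scope.

Lemma quat_eq (p q : quat) : q0 p = q0 q -> q1 p = q1 q -> q2 p = q2 q -> q3 p = q3 q -> p = q.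
Proof. destruct p, q; simpl; intros; subst; reflexivity. Qed.

Lemma qnorm2_nz p : p <> qzero -> qnorm2 p <> 0.
Proof.
  intros H E; apply H. destruct p as [a b c d]; unfold qnorm2 in E; simpl in E.
  assert (a = 0) by nra. assert (b = 0) by nra. assert (c = 0) by nra. assert (d = 0) by nra.
  subst; reflexivity.
Qed.

Lemma qnorm2_mul p q : qnorm2 (qmul p q) = qnorm2 p * qnorm2 q.
Proof. destruct p, q; unfold qnorm2, qmul; simpl; ring. Qed.

Lemma qmul_nz p q : p <> qzero -> q <> qzero -> qmul p q <> qzero.
Proof.
  intros Hp Hq E. apply (qnorm2_nz _ Hp). pose proof (qnorm2_nz _ Hq).
  assert (qnorm2 (qmul p q) = 0) by (rewrite E; unfold qnorm2; simpl; ring).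
  rewrite qnorm2_mul in H0. apply Rmult_integral in H0; tauto.
Qed.

Lemma qmul_assoc p q r : qmul (qmul p q) r = qmul p (qmul q r).
Proof. destruct p, q, r; apply quat_eq; simpl; ring. Qed.

Lemma qinv_l p : p <> qzero -> qmul (qinv p) p = qone.
Proof.
  intros H; pose proof (qnorm2_nz _ H) as N. destruct p as [a b c d].
  unfold qnorm2 in N; simpl in N.
  apply quat_eq; unfold qinv, qnorm2, qmul, qconj, qreal, qone; simpl; field; intro; apply N; lra.
Qed.

Lemma qmul_inv_cancel c u : c <> qzero -> qmul c (qmul (qinv c) u) = u.
Proof.
  intros H; pose proof (qnorm2_nz _ H) as N. destruct c as [a b e d], u.
  unfold qnorm2 in N; simpl in N.
  apply quat_eq; unfold qinv, qnorm2, qmul, qconj, qreal; simpl; field; intro; apply N; lra.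
Qed.

Lemma eq_of_mul_inv p q : q <> qzero -> qmul p (qinv q) = qone -> p = q.
Proof.
  intros Hq E.
  assert (p = qmul (qmul p (qinv q)) q).
  { rewrite qmul_assoc, qinv_l by auto. destruct p; apply quat_eq; simpl; ring. }
  rewrite H, E. destruct q; apply quat_eq; simpl; ring.
Qed.

Lemma key Gamma D : is_subgroup_G1 Gamma -> acts_freely Gamma -> Gamma D -> gs D = qzero ->
  ga D = qone /\ gb D = qzero.
Proof.
  intros [HG1 [Hid [Hmul Hinv]]] Hfree HD Hs.
  assert (Ha : ga D = qone).
  { destruct (classic (ga D = qone)) as [|Hne]; auto.
    set (p := qadd qone (qopp (ga D))).
    assert (Hp : p <> qzero).
    { intro E; apply Hne. destruct D as [[a0 a1 a2 a3] b r s]; unfold p in E; simpl in *.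
      injection E; intros; apply quat_eq; simpl; lra. }
    set (x := qmul (qinv p) (gr D)).
    assert (Hfix : g1act D (x, qzero) = (x, qzero)).
    { unfold g1act; simpl. rewrite Hs. f_equal.
      2:{ apply quat_eq; simpl; ring. }
      pose proof (qmul_inv_cancel p (gr D) Hp) as C. fold x in C.
      destruct D as [[a0 a1 a2 a3] b r s]; simpl in *. unfold p in C.
      destruct x as [x0 x1 x2 x3], b, r. unfold qmul, qadd, qopp, qone in C |- *; simpl in *.
      injection C; intros. apply quat_eq; simpl; lra. }
    pose proof (Hfree D HD _ Hfix). subst D; simpl in Hne; congruence. }
  split; auto.
  destruct (classic (gb D = qzero)) as [|Hne]; auto.
  set (y := qopp (qmul (qinv (gb D)) (gr D))).
  assert (Hfix : g1act D (qzero, y) = (qzero, y)).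
  { unfold g1act; simpl. rewrite Hs. f_equal.
    2:{ destruct y; apply quat_eq; simpl; ring. }
    pose proof (qmul_inv_cancel (gb D) (gr D) Hne) as C.
    assert (E : qmul (gb D) y = qopp (qmul (gb D) (qmul (qinv (gb D)) (gr D)))).
    { unfold y. destruct (gb D), (qmul (qinv _) (gr D)); apply quat_eq; simpl; ring. }
    rewrite E, C, Ha. destruct (gr D); apply quat_eq; simpl; ring. }
  pose proof (Hfree D HD _ Hfix). subst D; simpl in Hne; congruence.
Qed.

Lemma hol_comm Gamma A B : is_subgroup_G1 Gamma -> acts_freely Gamma -> Gamma A -> Gamma B ->
  holmul (hol A) (hol B) = holmul (hol B) (hol A).
Proof.
  intros HS Hf HA HB. pose proof HS as [HG1 [Hid [Hmul Hinv]]].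
  set (D := g1mul (g1mul A B) (g1inv (g1mul B A))).
  assert (HD : Gamma D) by (apply Hmul; auto).
  assert (Hs : gs D = qzero).
  { unfold D; simpl. destruct (gs A), (gs B); apply quat_eq; simpl; ring. }
  destruct (key Gamma D HS Hf HD Hs) as [Ha Hb].
  assert (Hnz : qmul (ga B) (ga A) <> qzero) by (apply qmul_nz; apply HG1; auto).
  unfold D in Ha, Hb; simpl in Ha, Hb.
  apply eq_of_mul_inv in Ha; auto.
  unfold holmul, hol; simpl. rewrite Ha in *. f_equal.
  assert (E : qmul (qmul (ga B) (ga A)) (qopp (qmul (qinv (qmul (ga B) (ga A))) (qadd (qmul (ga B) (gb A)) (gb B))))
     = qopp (qmul (qmul (ga B) (ga A)) (qmul (qinv (qmul (ga B) (ga A))) (qadd (qmul (ga B) (gb A)) (gb B))))).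
  { destruct (qmul (ga B) (ga A)), (qmul (qinv _) _); apply quat_eq; simpl; ring. }
  rewrite E, qmul_inv_cancel in Hb by auto.
  destruct (qadd (qmul (ga A) (gb B)) (gb A)) as [u0 u1 u2 u3], (qadd (qmul (ga B) (gb A)) (gb B)) as [w0 w1 w2 w3].
  simpl in Hb. injection Hb; intros. apply quat_eq; simpl; lra.
Qed.

Definition nonreal (a : quat) := ~ (q1 a = 0 /\ q2 a = 0 /\ q3 a = 0).

Lemma plane (v a : quat) : nonreal v -> qmul a v = qmul v a ->
  let S := q1 v ^ 2 + q2 v ^ 2 + q3 v ^ 2 in
  let n := sqrt S in
  let I := Quat 0 (q1 v / n) (q2 v / n) (q3 v / n) in
  qmul I I = qopp qone /\
  exists x y : R, a = qadd (qreal x) (qmul (qreal y) I).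
Proof.
  intros Hv Hc S n I.
  destruct v as [v0 v1 v2 v3], a as [a0 a1 a2 a3]; unfold nonreal in Hv; simpl in *.
  assert (HS : S > 0).
  { unfold S. destruct (Req_dec v1 0); [destruct (Req_dec v2 0); [destruct (Req_dec v3 0)|]|].
    - exfalso; tauto.
    - pose proof (Rsqr_pos_lt v3 H1); unfold Rsqr in *; nra.
    - pose proof (Rsqr_pos_lt v2 H0); unfold Rsqr in *; nra.
    - pose proof (Rsqr_pos_lt v1 H); unfold Rsqr in *; nra. }
  assert (Hn : n > 0) by (apply sqrt_lt_R0; lra).
  assert (Hnn : n * n = S) by (apply sqrt_sqrt; lra).
  split.
  - unfold I; apply quat_eq; simpl.
    + transitivity (- (S / (n*n))). { unfold S; field; lra. }
      rewrite Hnn; field; lra.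
    + field; lra.
    + field; lra.
    + field; lra.
  - injection Hc; intros E3 E2 E1 E0.
    set (D := a1 * v1 + a2 * v2 + a3 * v3).
    exists a0, (D / S * n).
    assert (K1 : S * a1 = D * v1).
    { unfold S. assert (X1 : a1*v2 - a2*v1 = 0) by lra. assert (X2 : a1*v3 - a3*v1 = 0) by lra.
      transitivity (D * v1 + v2 * (a1*v2 - a2*v1) + v3 * (a1*v3 - a3*v1)); [unfold D; ring| rewrite X1, X2; ring]. }
    assert (K2 : S * a2 = D * v2).
    { unfold S. assert (X1 : a1*v2 - a2*v1 = 0) by lra. assert (X2 : a2*v3 - a3*v2 = 0) by lra.
      transitivity (D * v2 - v1 * (a1*v2 - a2*v1) + v3 * (a2*v3 - a3*v2)); [unfold D; ring| rewrite X1, X2; ring]. }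
    assert (K3 : S * a3 = D * v3).
    { unfold S. assert (X1 : a3*v2 - a2*v3 = 0) by lra. assert (X2 : a1*v3 - a3*v1 = 0) by lra.
      transitivity (D * v3 + v2 * (a3*v2 - a2*v3) - v1 * (a1*v3 - a3*v1)); [unfold D; ring| rewrite X1, X2; ring]. }
    unfold I; apply quat_eq; simpl.
    + ring.
    + apply (Rmult_eq_reg_l S); [| lra]. rewrite K1. field; lra.
    + apply (Rmult_eq_reg_l S); [| lra]. rewrite K2. field; lra.
    + apply (Rmult_eq_reg_l S); [| lra]. rewrite K3. field; lra.
Qed.

Theorem mainTheorem9 (Gamma : G1mat -> Prop) :
  is_subgroup_G1 Gamma -> acts_freely Gamma ->
  hol_abelian Gamma /\
  exists I : quat, qmul I I = qopp qone /\
    forall a b : quat, (exists A, Gamma A /\ hol A = (a, b)) ->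
      exists x y : R, a = qadd (qreal x) (qmul (qreal y) I).
Proof.
  intros HS Hf.
  assert (Hab : hol_abelian Gamma) by (intros A B HA HB; apply (hol_comm Gamma); auto).
  split; [exact Hab|].
  destruct (classic (exists A, Gamma A /\ nonreal (ga A))) as [[A0 [HA0 Hv]]|Hno].
  - set (v := ga A0) in *.
    pose proof (plane v v Hv eq_refl) as [HI _]; cbv zeta in HI.
    eexists; split; [exact HI|].
    intros a b [A [HA Eh]].
    injection Eh; intros _ Ea.
    assert (Hc : qmul a v = qmul v a).
    { pose proof (Hab A A0 HA HA0) as E. apply (f_equal fst) in E. simpl in E.
      rewrite <- Ea; exact E. }
    exact (proj2 (plane v a Hv Hc)).
  - exists (Quat 0 1 0 0). split.
    + apply quat_eq; simpl; ring.
    + intros a b [A [HA Eh]]. injection Eh; intros _ Ea.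
      assert (Hr : ~ nonreal a).
      { intro H; apply Hno; exists A; rewrite Ea; auto. }
      unfold nonreal in Hr. apply NNPP in Hr. destruct Hr as [H1 [H2 H3]].
      exists (q0 a), 0. apply quat_eq; simpl; try rewrite H1; try rewrite H2; try rewrite H3; ring.
Qed.
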